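(* There is no C-loop $L$ whose nucleus $N$ has index $2$ in $L$ (i.e. such that $N$ has exactly two cosets in $L$).
   Context: A C-loop is a loop satisfying $x(y(yz))=((xy)y)z$ for all $x,y,z$. The nucleus $N$ of a loop is the set of elements $a$ with $a(yz)=(ay)z$, $y(az)=(ya)z$, $y(za)=(yz)a$ for all $y,z$; in a C-loop it is a normal subloop, so its cosets form the factor loop $L/N$. *)

(* Defs.v *)
Definition is_loop {T : Type} (mul : T -> T -> T) (e : T) : Prop :=
  (forall x, mul e x = x /\ mul x e = x) /\
  (forall a b, exists x, mul a x = b /\ forall x', mul a x' = b -> x' = x) /\
  (forall a b, exists y, mul y a = b /\ forall y', mul y' a = b -> y' = y).

Definition C_law {T : Type} (mul : T -> T -> T) : Prop :=
  forall x y z, mul x (mul y (mul y z)) = mul (mul (mul x y) y) z.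

Definition in_nucleus {T : Type} (mul : T -> T -> T) (a : T) : Prop :=
  forall y z,
    mul a (mul y z) = mul (mul a y) z /\
    mul y (mul a z) = mul (mul y a) z /\
    mul y (mul z a) = mul (mul y z) a.

Definition nucleus_coset {T : Type} (mul : T -> T -> T) (x : T) : T -> Prop :=
  fun w => exists n, in_nucleus mul n /\ w = mul x n.

Definition nucleus_index_two {T : Type} (mul : T -> T -> T) : Prop :=
  exists x y,
    nucleus_coset mul x <> nucleus_coset mul y /\
    forall z, nucleus_coset mul z = nucleus_coset mul x \/
              nucleus_coset mul z = nucleus_coset mul y.

(* Main.v *)
Require Import Defs.
From Stdlib Require Import Classical FunctionalExtensionality PropExtensionality.

Lemma lcancel {T} (mul : T -> T -> T) e : is_loop mul e ->
  forall a x1 x2, mul a x1 = mul a x2 -> x1 = x2.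
Proof.
  intros [_ [Hl _]] a x1 x2 E.
  destruct (Hl a (mul a x2)) as [x [_ U]].
  rewrite (U x1 E), (U x2 eq_refl). reflexivity.
Qed.

Lemma rcancel {T} (mul : T -> T -> T) e : is_loop mul e ->
  forall a x1 x2, mul x1 a = mul x2 a -> x1 = x2.
Proof.
  intros [_ [_ Hr]] a x1 x2 E.
  destruct (Hr a (mul x2 a)) as [x [_ U]].
  rewrite (U x1 E), (U x2 eq_refl). reflexivity.
Qed.

Lemma nuc_e {T} (mul : T -> T -> T) e : is_loop mul e -> in_nucleus mul e.
Proof.
  intros [Hid _] y z. repeat split.
  - rewrite (proj1 (Hid _)), (proj1 (Hid _)); reflexivity.
  - rewrite (proj1 (Hid _)), (proj2 (Hid _)); reflexivity.
  - rewrite (proj2 (Hid _)), (proj2 (Hid _)); reflexivity.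
Qed.

Lemma nuc_mul {T} (mul : T -> T -> T) a b :
  in_nucleus mul a -> in_nucleus mul b -> in_nucleus mul (mul a b).
Proof.
  intros Ha Hb y z. repeat split.
  - rewrite <- (proj1 (Ha b (mul y z))), (proj1 (Hb y z)), (proj1 (Ha (mul b y) z)),
      (proj1 (Ha b y)). reflexivity.
  - rewrite <- (proj1 (Ha b z)), (proj1 (proj2 (Ha y (mul b z)))),
      (proj1 (proj2 (Hb (mul y a) z))), <- (proj1 (proj2 (Ha y b))). reflexivity.
  - rewrite (proj2 (proj2 (Hb z a))), (proj2 (proj2 (Hb y (mul z a)))),
      (proj2 (proj2 (Ha y z))), <- (proj2 (proj2 (Hb (mul y z) a))). reflexivity.
Qed.

Lemma nuc_inv {T} (mul : T -> T -> T) e : is_loop mul e ->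
  forall a, in_nucleus mul a -> exists a', in_nucleus mul a' /\ mul a a' = e /\ mul a' a = e.
Proof.
  intros HL a Ha. pose proof HL as [Hid [Hl Hr]].
  destruct (Hl a e) as [a' [Ha' _]].
  assert (E2 : mul a' a = e).
  { apply (rcancel mul e HL a').
    rewrite <- (proj1 (proj2 (Ha a' a'))), Ha'.
    rewrite (proj2 (Hid _)), (proj1 (Hid _)). reflexivity. }
  exists a'. split; [|split; assumption].
  intros y z. repeat split.
  - apply (lcancel mul e HL a).
    rewrite (proj1 (Ha _ _)), Ha', (proj1 (Hid _)).
    rewrite (proj1 (Ha _ _)), (proj1 (Ha _ _)), Ha', (proj1 (Hid _)). reflexivity.
  - set (t := mul a' z).
    assert (Ez : z = mul a t).
    { unfold t. rewrite (proj1 (Ha _ _)), Ha', (proj1 (Hid _)). reflexivity. }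
    clearbody t. subst z.
    rewrite (proj1 (proj2 (Ha (mul y a') t))), <- (proj2 (proj2 (Ha y a'))), E2, (proj2 (Hid _)).
    reflexivity.
  - apply (rcancel mul e HL a).
    rewrite <- (proj2 (proj2 (Ha _ _))), <- (proj2 (proj2 (Ha _ _))), E2, (proj2 (Hid _)).
    rewrite <- (proj2 (proj2 (Ha _ _))), E2, (proj2 (Hid _)). reflexivity.
Qed.

Lemma main {T} (mul : T -> T -> T) e : is_loop mul e -> C_law mul ->
  forall a, ~ in_nucleus mul a ->
  (forall z, ~ in_nucleus mul z -> exists n, in_nucleus mul n /\ z = mul a n) -> False.
Proof.
  intros HL HC a Na H. pose proof HL as [Hid [Hl Hr]].
  assert (LAlt : forall w, mul a (mul a w) = mul (mul a a) w).
  { intro w. pose proof (HC e a w) as E.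
    rewrite (proj1 (Hid _)), (proj1 (Hid _)) in E. exact E. }
  assert (RAlt : forall y, mul y (mul a a) = mul (mul y a) a).
  { intro y. pose proof (HC y a e) as E.
    rewrite (proj2 (Hid a)), (proj2 (Hid _)) in E. exact E. }
  assert (L1 : forall b c, ~ in_nucleus mul b -> ~ in_nucleus mul c -> in_nucleus mul (mul b c)).
  { intros b c Nb Nc. apply NNPP. intro Nbc.
    destruct (H _ Nbc) as [m [Pm Em]].
    destruct (H _ Nb) as [k [Pk Ek]].
    destruct (nuc_inv mul e HL k Pk) as [k' [Pk' [Ekk _]]].
    assert (Ea : a = mul b k').
    { rewrite Ek, <- (proj2 (proj2 (Pk' _ _))), Ekk, (proj2 (Hid _)). reflexivity. }
    rewrite Ea, <- (proj1 (proj2 (Pk' _ _))) in Em.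
    apply (lcancel mul e HL) in Em. apply Nc. rewrite Em. apply nuc_mul; assumption. }
  assert (Rc : forall z, ~ in_nucleus mul z -> exists n, in_nucleus mul n /\ z = mul n a).
  { intros z Nz. destruct (Hr a z) as [n [En _]]. exists n. split; [|symmetry; exact En].
    apply NNPP. intro Nn. apply Nz. rewrite <- En. apply L1; assumption. }
  apply Na. intros y z. split; [|split].
  - destruct (classic (in_nucleus mul y)) as [Py|Ny].
    + apply (proj1 (proj2 (Py a z))).
    + destruct (H _ Ny) as [n [Pn ->]].
      rewrite <- (proj1 (proj2 (Pn _ _))), LAlt, (proj2 (proj2 (Pn _ _))).
      rewrite <- (proj1 (proj2 (Pn _ _))). reflexivity.
  - destruct (classic (in_nucleus mul y)) as [Py|Ny].
    + apply (proj1 (Py a z)).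
    + destruct (Rc _ Ny) as [n [Pn ->]].
      rewrite <- (proj1 (Pn _ _)), LAlt, <- (proj1 (Pn _ _)), <- (proj1 (Pn _ _)).
      reflexivity.
  - destruct (classic (in_nucleus mul z)) as [Pz|Nz].
    + apply (proj1 (proj2 (Pz y a))).
    + destruct (Rc _ Nz) as [n [Pn ->]].
      pose proof (L1 a a Na Na) as Paa.
      rewrite <- (proj1 (Pn _ _)), (proj2 (proj2 (Paa _ _))), RAlt.
      rewrite (proj1 (proj2 (Pn _ _))). reflexivity.
Qed.

Lemma coset_nuc {T} (mul : T -> T -> T) e : is_loop mul e ->
  forall a, in_nucleus mul a -> nucleus_coset mul a = nucleus_coset mul e.
Proof.
  intros HL a Pa. pose proof HL as [Hid _].
  destruct (nuc_inv mul e HL a Pa) as [a' [Pa' [E1 E2]]].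
  apply functional_extensionality. intro w. apply propositional_extensionality.
  unfold nucleus_coset. split; intros [n [Pn ->]].
  - exists (mul a n). split; [apply nuc_mul; assumption|].
    rewrite (proj1 (Hid _)). reflexivity.
  - exists (mul a' n). split; [apply nuc_mul; assumption|].
    rewrite (proj1 (Pa _ _)), E1. reflexivity.
Qed.

Theorem lemma2p7 (T : Type) (mul : T -> T -> T) (e : T) :
  is_loop mul e -> C_law mul -> ~ nucleus_index_two mul.
Proof.
  intros HL HC [x [y [Nxy Hz]]]. pose proof HL as [Hid _].
  assert (self : forall z, nucleus_coset mul z z).
  { intro z. exists e. split; [apply (nuc_e mul e HL)|]. rewrite (proj2 (Hid _)). reflexivity. }
  assert (gen : forall u v, nucleus_coset mul u <> nucleus_coset mul v ->
     nucleus_coset mul e = nucleus_coset mul u ->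
     (forall z, nucleus_coset mul z = nucleus_coset mul u \/ nucleus_coset mul z = nucleus_coset mul v) -> False).
  { intros u v Nuv Eu Hz'.
    destruct (classic (in_nucleus mul v)) as [Pv|Nv].
    - apply Nuv. rewrite <- Eu. symmetry. apply (coset_nuc mul e HL v Pv).
    - apply (main mul e HL HC v Nv). intros z Nz.
      destruct (Hz' z) as [E|E].
      + exfalso. apply Nz. pose proof (self z) as S. rewrite E, <- Eu in S.
        destruct S as [n [Pn ->]]. rewrite (proj1 (Hid _)). exact Pn.
      + pose proof (self z) as S. rewrite E in S. exact S. }
  destruct (Hz e) as [E|E].
  - exact (gen x y Nxy E Hz).
  - apply (gen y x (fun h => Nxy (eq_sym h)) E).
    intro z. destruct (Hz z); tauto.
Qed.
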